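(* Let $H$ and $G$ be locally compact, Hausdorff, étale groupoids, let $c : H \to \mathbb{Z}$ be a continuous cocycle, and let $\alpha : G \to G$ be an automorphism. Then the groupoid $H \times_{c,\alpha} G$, endowed with the product topology, is locally compact, Hausdorff and étale. If $G$ and $H$ are second countable, so is $H\times_{c,\alpha}G$. If $G$ and $H$ are ample, so is $H \times_{c,\alpha} G$.
   Context: A cocycle satisfies $c(gh) = c(g)+c(h)$ whenever $s(g) = r(h)$. An automorphism of a topological groupoid is a homeomorphism preserving the groupoid structure. $H \times_{c,\alpha} G$ is the set $H \times G$ with unit space $H^{(0)}\times G^{(0)}$, $r(h,g) = (r(h),r(g))$, $s(h,g) = (s(h), \alpha^{c(h)}(s(g)))$, product $(h_1,g_1)(h_2,g_2) = (h_1h_2, g_1\alpha^{-c(h_1)}(g_2))$ when $s(h_1,g_1) = r(h_2,g_2)$, and inverse $(h,g)^{-1} = (h^{-1},\alpha^{c(h)}(g^{-1}))$. A groupoid is étale if its range map is a local homeomorphism, and ample if it has a basis of compact open bisections. *)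

(* Defs.v *)
From HB Require Import structures.
From mathcomp Require Import all_boot all_order all_algebra.
From mathcomp Require Import all_classical all_reals topology.
Set Implicit Arguments. Unset Strict Implicit. Unset Printing Implicit Defensive.
Import Order.TTheory GRing.Theory Num.Theory.
Local Open Scope classical_set_scope.

(* A groupoid structure on the carrier T (the arrows), given by a total
   multiplication (only meaningful on composable pairs, s g = r h),
   an inverse, and range/source maps; the unit space is range r. *)
Definition is_groupoid (T : Type) (mul : T -> T -> T) (inv : T -> T)
    (r s : T -> T) : Prop :=
  ((forall g, r (r g) = r g /\ s (r g) = r g /\ r (s g) = s g /\ s (s g) = s g) /\
      (forall g h, s g = r h -> r (mul g h) = r g /\ s (mul g h) = s h) /\
      (forall g h k, s g = r h -> s h = r k ->
         mul (mul g h) k = mul g (mul h k)) /\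
      (forall g, mul (r g) g = g /\ mul g (s g) = g) /\
      (forall g, r (inv g) = s g /\ s (inv g) = r g) /\
      (forall g, mul (inv g) g = s g /\ mul g (inv g) = r g)).

Definition units (T : Type) (r : T -> T) : set T := range r.

Definition is_top_groupoid (T : topologicalType) (mul : T -> T -> T)
    (inv : T -> T) (r s : T -> T) : Prop :=
  [/\ is_groupoid mul inv r s,
      {within [set p : T * T | s p.1 = r p.2],
         continuous (fun p : T * T => mul p.1 p.2)},
      continuous inv, continuous r & continuous s].

Definition local_homeo_onto (T : topologicalType) (f : T -> T) (Y : set T) :=
  continuous f /\ f @` setT `<=` Y /\
  forall x, exists U : set T, [/\ open U, U x,
    (forall a b, U a -> U b -> f a = f b -> a = b) &
    (forall W, open W -> W `<=` U -> exists V, open V /\ f @` W = V `&` Y)].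

Definition etale (T : topologicalType) (r : T -> T) :=
  local_homeo_onto r (units r).

Definition bisection (T : Type) (r s : T -> T) (B : set T) :=
  (forall a b, B a -> B b -> r a = r b -> a = b) /\
  (forall a b, B a -> B b -> s a = s b -> a = b).

Definition ample (T : topologicalType) (r s : T -> T) :=
  basis [set B : set T | compact B /\ open B /\ bisection r s B].

Definition cocycle (T : Type) (mul : T -> T -> T) (r s : T -> T) (c : T -> int) :=
  forall g h, s g = r h -> c (mul g h) = (c g + c h)%R.

(* continuity into Z with its (discrete) topology *)
Definition continuous_Z (T : topologicalType) (c : T -> int) :=
  forall n : int, open (c @^-1` [set n]).

Definition groupoid_automorphism (T : topologicalType) (mul : T -> T -> T)
    (inv : T -> T) (r s : T -> T) (alpha beta : T -> T) :=
  [/\ cancel alpha beta, cancel beta alpha, continuous alpha, continuous beta &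
     [/\ (forall g h, s g = r h -> alpha (mul g h) = mul (alpha g) (alpha h)),
      (forall g, alpha (inv g) = inv (alpha g)) &
      (forall g, alpha (r g) = r (alpha g) /\ alpha (s g) = s (alpha g))]].

(* integer powers alpha^n, with beta the inverse of alpha *)
Definition zpow (T : Type) (alpha beta : T -> T) (n : int) : T -> T :=
  match n with
  | Posz k => iter k alpha
  | Negz k => iter k.+1 beta
  end.

Section Skew.
Variables (H G : Type) (mulH : H -> H -> H) (invH rH sH : H -> H)
  (mulG : G -> G -> G) (invG rG sG : G -> G) (c : H -> int) (alpha beta : G -> G).

Definition skew_r (x : H * G) : H * G := (rH x.1, rG x.2).
Definition skew_s (x : H * G) : H * G :=
  (sH x.1, zpow alpha beta (c x.1) (sG x.2)).
Definition skew_mul (x y : H * G) : H * G :=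
  (mulH x.1 y.1, mulG x.2 (zpow alpha beta (- c x.1)%R y.2)).
Definition skew_inv (x : H * G) : H * G :=
  (invH x.1, zpow alpha beta (c x.1) (invG x.2)).
End Skew.

(* Main.v *)
Require Import Defs.
From HB Require Import structures.
From mathcomp Require Import all_boot all_order all_algebra.
From mathcomp Require Import all_classical all_reals topology.
From mathcomp Require Import zify.
Import GRing.Theory Num.Theory.
Local Open Scope classical_set_scope.

Section Top.
Context {T U : topologicalType}.

Lemma nbhs_prodE (p : T * U) (A : set (T * U)) :
  nbhs p A <-> exists P Q, [/\ nbhs p.1 P, nbhs p.2 Q &
     (forall a b, P a -> Q b -> A (a, b))].
Proof.
split.
  case=> -[P Q] /= [nP nQ] sPQ; exists P, Q; split => // a b Pa Qb.
  exact: (sPQ (a, b)).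
case=> P [Q [nP nQ sPQ]]; exists (P, Q) => //; case=> a b [/= Pa Qb].
exact: sPQ.
Qed.

Lemma open_setX (A : set T) (B : set U) : open A -> open B -> open (A `*` B).
Proof.
rewrite !openE => oA oB [a b] [/= Aa Bb]; apply/nbhs_prodE.
exists A, B; split => //=; [exact: oA | exact: oB].
Qed.

Lemma closed_setX (A : set T) (B : set U) : closed A -> closed B -> closed (A `*` B).
Proof.
move=> cA cB.
have -> : A `*` B = ~` ((~` A) `*` setT `|` setT `*` (~` B)).
  apply/seteqP; split.
    by move=> [a b] [/= Aa Bb] [[/= ?]|[_ /=]].
  move=> [a b] /= H; split => /=; apply: contrapT => N; apply: H.
    by left. by right.
apply: open_closedC; apply: openU; apply: open_setX => //;
  (exact: openT || exact: closed_openC).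
Qed.

Lemma prod_hausdorff : hausdorff_space T -> hausdorff_space U ->
  hausdorff_space (T * U)%type.
Proof.
rewrite !open_hausdorff => hT hU [x1 x2] [y1 y2] xy.
have [e1|n1] := eqVneq x1 y1.
  have n2 : x2 != y2 by apply: contraNneq xy => ->; rewrite e1.
  have [[A B] /= [xA yB] [oA oB AB]] := hU _ _ n2.
  exists (setT `*` A, setT `*` B) => /=.
    by rewrite !inE; move: xA yB; rewrite !inE.
  split; [exact: open_setX openT oA|exact: open_setX openT oB|].
  apply/eqP/seteqP; split => // -[a b] [[_ /= Ab] [_ /= Bb]].
  by move/eqP: AB => AB; have : (A `&` B) b by []; rewrite AB.
have [[A B] /= [xA yB] [oA oB AB]] := hT _ _ n1.
exists (A `*` setT, B `*` setT) => /=.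
  by rewrite !inE; move: xA yB; rewrite !inE.
split; [exact: open_setX oA openT|exact: open_setX oB openT|].
apply/eqP/seteqP; split => // -[a b] [[/= Ab _] [/= Bb _]].
by move/eqP: AB => AB; have : (A `&` B) a by []; rewrite AB.
Qed.

Lemma prod_locally_compact : locally_compact [set: T] -> locally_compact [set: U] ->
  locally_compact [set: (T * U)%type].
Proof.
move=> lT lU [x1 x2] _.
have [A nA [cA clA]] := lT x1 I.
have [B nB [cB clB]] := lU x2 I.
exists (A `*` B); last by split; [exact: compact_setX|exact: closed_setX].
move: nA nB; rewrite !withinET => nA nB.
apply/nbhs_prodE; exists A, B; split => //.
Qed.

Lemma continuous_prod_map (f1 : T -> T) (f2 : U -> U) :
  continuous f1 -> continuous f2 -> continuous (fun p : T * U => (f1 p.1, f2 p.2)).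
Proof.
move=> c1 c2 [a b] W /nbhs_prodE [P [Q [nP nQ sPQ]]].
apply/nbhs_prodE; exists (f1 @^-1` P), (f2 @^-1` Q); split.
- exact: c1.
- exact: c2.
- by move=> x y Px Qy; exact: sPQ.
Qed.
End Top.

Lemma continuous_local (X Y : topologicalType) (f : X -> Y) :
  (forall x : X, exists N : set X, nbhs x N /\ exists g : X -> Y, continuous g /\
     (forall y, N y -> f y = g y)) -> continuous f.
Proof.
move=> H x W nW; have [N [nN [g [cg e]]]] := H x.
rewrite e in nW; last exact: nbhs_singleton.
have := cg x W nW => ngW.
apply: filterS (filterI nN ngW) => y [Ny gy] /=.
by rewrite e.
Qed.

Section Zpow.
Variables (G : Type) (alpha beta : G -> G).
Hypotheses (ab : cancel alpha beta) (ba : cancel beta alpha).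
Local Notation Z := (zpow alpha beta).

Lemma zpow0 x : Z 0 x = x. Proof. by []. Qed.

Lemma zpowS (n : int) x : Z (n + 1)%R x = alpha (Z n x).
Proof.
case: n => k.
  by have -> : (Posz k + 1 = Posz k.+1)%R by lia.
case: k => [|k].
  by have -> : (Negz 0 + 1 = 0)%R by lia; rewrite /= ba.
have -> : (Negz k.+1 + 1 = Negz k)%R by lia.
by rewrite /= ba.
Qed.

Lemma zpowN1 (n : int) x : Z (n - 1)%R x = beta (Z n x).
Proof.
have -> : n = ((n - 1) + 1)%R by lia.
by rewrite zpowS ab; have -> : ((n - 1 + 1) - 1 = n - 1)%R by lia.
Qed.

Lemma zpowD (m n : int) x : Z (m + n)%R x = Z m (Z n x).
Proof.
case: m => k.
  elim: k => [|k IH]; first by rewrite add0r.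
  have -> : (Posz k.+1 + n = (Posz k + n) + 1)%R by lia.
  by rewrite zpowS IH.
elim: k => [|k IH].
  have -> : (Negz 0 + n = n - 1)%R by lia.
  by rewrite zpowN1.
have -> : (Negz k.+1 + n = (Negz k + n) - 1)%R by lia.
by rewrite zpowN1 IH.
Qed.

Lemma zpowK (n : int) x : Z (- n)%R (Z n x) = x.
Proof. by rewrite -zpowD addNr. Qed.

Lemma zpowKV (n : int) x : Z n (Z (- n)%R x) = x.
Proof. by rewrite -zpowD addrN. Qed.

Lemma zpow_iter (P : (G -> G) -> Prop) : P id -> P alpha -> P beta ->
  (forall f g, P f -> P g -> P (f \o g)) -> forall n, P (Z n).
Proof.
move=> Pid Pa Pb Pc n.
have iterP f k : P f -> P (iter k f).
  move=> Pf; elim: k => [|k IH] //.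
  have -> : iter k.+1 f = f \o iter k f by [].
  exact: Pc.
by case: n => k /=; apply: iterP.
Qed.
End Zpow.

Section Alg.
Variables (H G : Type) (mulH : H -> H -> H) (invH rH sH : H -> H)
  (mulG : G -> G -> G) (invG rG sG : G -> G) (c : H -> int) (alpha beta : G -> G).
Hypotheses (hH : is_groupoid mulH invH rH sH) (hG : is_groupoid mulG invG rG sG)
  (cc : cocycle mulH rH sH c) (ab : cancel alpha beta) (ba : cancel beta alpha)
  (amul : forall g h, sG g = rG h -> alpha (mulG g h) = mulG (alpha g) (alpha h))
  (ainv : forall g, alpha (invG g) = invG (alpha g))
  (ars : forall g, alpha (rG g) = rG (alpha g) /\ alpha (sG g) = sG (alpha g)).
Local Notation Z := (zpow alpha beta).

Let zpowD m n x : Z (m + n)%R x = Z m (Z n x) := @zpowD _ _ _ ab ba m n x.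
Let zpowK n x : Z (- n)%R (Z n x) = x := @zpowK _ _ _ ab ba n x.
Let zpow0 x : Z 0 x = x := @zpow0 _ alpha beta x.

Definition ghom (f : G -> G) :=
  [/\ forall g h, sG g = rG h -> f (mulG g h) = mulG (f g) (f h),
      forall g, f (invG g) = invG (f g),
      forall g, f (rG g) = rG (f g) & forall g, f (sG g) = sG (f g)].

Lemma ghomZ n : ghom (Z n).
Proof.
apply: zpow_iter.
- by split.
- by split => // g; have [] := ars g.
- split.
  + move=> g h e; apply: (can_inj ab); rewrite amul ?ba //.
    apply: (can_inj ab); rewrite (proj2 (ars _)) (proj1 (ars _)) !ba //.
  + by move=> g; apply: (can_inj ab); rewrite ainv !ba.
  + by move=> g; apply: (can_inj ab); rewrite (proj1 (ars _)) !ba.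
  + by move=> g; apply: (can_inj ab); rewrite (proj2 (ars _)) !ba.
- move=> f g [f1 f2 f3 f4] [g1 g2 g3 g4]; split => /=.
  + by move=> x y e; rewrite g1 // f1 // -g4 -g3 e.
  + by move=> x; rewrite g2 f2.
  + by move=> x; rewrite g3 f3.
  + by move=> x; rewrite g4 f4.
Qed.

Lemma Zmul n g h : sG g = rG h -> Z n (mulG g h) = mulG (Z n g) (Z n h).
Proof. by have [m i rr ss] := ghomZ n; exact: m. Qed.
Lemma Zinv n g : Z n (invG g) = invG (Z n g). Proof. by have [m i rr ss] := ghomZ n. Qed.
Lemma Zr n g : Z n (rG g) = rG (Z n g). Proof. by have [m i rr ss] := ghomZ n. Qed.
Lemma Zs n g : Z n (sG g) = sG (Z n g). Proof. by have [m i rr ss] := ghomZ n. Qed.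

Lemma c_r h : c (rH h) = 0%R.
Proof.
case: hH => U [C [A [I _]]].
have [rr [sr _]] := U h.
have := cc (rH h) (rH h); rewrite sr rr => /(_ erefl).
have [I1 _] := I (rH h); rewrite rr in I1; rewrite I1; lia.
Qed.

Lemma c_s h : c (sH h) = 0%R.
Proof.
case: hH => U [C [A [I _]]].
have [_ [_ [rs ss]]] := U h.
have := cc (sH h) (sH h); rewrite ss rs => /(_ erefl).
have [_ I1] := I (sH h); rewrite ss in I1; rewrite I1; lia.
Qed.

Lemma c_inv h : c (invH h) = (- c h)%R.
Proof.
case: hH => U [C [A [I [Ri Mi]]]].
have := cc (invH h) h (proj2 (Ri h)).
rewrite (proj1 (Mi h)) c_s; lia.
Qed.

Lemma comp_G n g1 g2 : Z n (sG g1) = rG g2 -> sG g1 = rG (Z (- n)%R g2).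
Proof. by move=> e; rewrite -Zr -e zpowK. Qed.

Let mul := skew_mul mulH mulG c alpha beta.
Let inv := skew_inv invH invG c alpha beta.
Let r := skew_r rH rG.
Let s := skew_s sH sG c alpha beta.

Lemma skew_groupoid : is_groupoid mul inv r s.
Proof.
case: hH => UH [CH [AH [IH [RH MH]]]].
case: hG => UG [CG [AG [IG [RG MG]]]].
rewrite /is_groupoid /mul /inv /r /s /skew_mul /skew_inv /skew_r /skew_s /=.
split.
  case=> h g /=.
  have [rrh [srh [rsh ssh]]] := UH h; have [rrg [srg [rsg ssg]]] := UG g.
  rewrite c_r c_s zpow0 rrh rrg srh srg rsh -Zr rsg ssh -Zs ssg zpow0.
  by [].
split.
  case=> h1 g1 [h2 g2] /= [e1 e2].
  have e3 := comp_G _ _ _ e2.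
  have [r1 s1] := CH _ _ e1; have [r2 s2] := CG _ _ e3.
  rewrite r1 r2 s1 s2 cc // -Zs -zpowD.
  by have -> : (c h1 + c h2 + - c h1 = c h2)%R by lia.
split.
  case=> h1 g1 [h2 g2] [h3 g3] /= [e1 e2] [e1' e2'].
  have f1 := comp_G _ _ _ e2; have f2 := comp_G _ _ _ e2'.
  rewrite AH // cc // Zmul // -zpowD.
  have -> : (- c h1 + - c h2 = - (c h1 + c h2))%R by lia.
  rewrite AG //.
  rewrite -Zs f2 Zr -zpowD; congr (rG (Z _ g3)); lia.
split.
  case=> h g /=.
  have [-> ->] := IH h; rewrite c_r.
  have -> : (- 0 = 0 :> int)%R by []. 
  by rewrite zpow0 zpowK; have [-> ->] := IG g.
split.
  case=> h g /=.
  have [-> ->] := RH h.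
  by rewrite c_inv -Zs -Zr zpowK; have [-> ->] := RG g.
case=> h g /=.
have [-> ->] := MH h.
rewrite c_inv opprK -Zmul; last by have [_ ->] := RG g.
by rewrite zpowK; have [-> ->] := MG g; rewrite Zs.
Qed.
End Alg.

Lemma basisP (T : topologicalType) (B : set (set T)) : basis B ->
  forall x (P : set T), nbhs x P -> exists U, [/\ B U, U x & U `<=` P].
Proof.
move=> [_ h] x P nP; have [U [BU Ux] UP] := h x P nP.
by exists U.
Qed.

Lemma basisI (T : topologicalType) (B : set (set T)) : B `<=` open ->
  (forall x (P : set T), nbhs x P -> exists U, [/\ B U, U x & U `<=` P]) ->
  basis B.
Proof.
move=> Bo h; split => // x P nP; have [U [BU Ux UP]] := h x P nP.
by exists U.
Qed.

Lemma within_contE (X Y : topologicalType) (A : set X) (f : X -> Y) :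
  (forall x, A x -> forall W, nbhs (f x) W -> nbhs x (fun y => A y -> W (f y))) ->
  {within A, continuous f}.
Proof.
move=> h; apply/subspace_continuousP => x Ax W nW.
exact: h.
Qed.

Lemma within_contP (X Y : topologicalType) (A : set X) (f : X -> Y) :
  {within A, continuous f} ->
  (forall x, A x -> forall W, nbhs (f x) W -> nbhs x (fun y => A y -> W (f y))).
Proof.
move/subspace_continuousP => h x Ax W nW.
exact: h x Ax W nW.
Qed.

Section TopSkew.
Variables (H G : topologicalType)
  (mulH : H -> H -> H) (invH rH sH : H -> H)
  (mulG : G -> G -> G) (invG rG sG : G -> G)
  (c : H -> int) (alpha beta : G -> G).
Hypotheses (tH : is_top_groupoid mulH invH rH sH)
  (tG : is_top_groupoid mulG invG rG sG)
  (cc : cocycle mulH rH sH c) (cZ : continuous_Z c)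
  (aut : groupoid_automorphism mulG invG rG sG alpha beta).
Local Notation Z := (zpow alpha beta).

Lemma Zcont n : continuous (Z n).
Proof.
case: aut => ab ba ca cb _.
apply: (@zpow_iter G alpha beta (fun f : G -> G => continuous f)) => //.
- by move=> x; exact: cvg_id.
- move=> f g cf cg x; exact: (continuous_comp (cg x) (cf _)).
Qed.

Lemma nbhs_c (h : H) : nbhs h (c @^-1` [set c h]).
Proof. by apply: open_nbhs_nbhs; split => //; exact: cZ. Qed.

Lemma skew_top : is_top_groupoid (skew_mul mulH mulG c alpha beta)
  (skew_inv invH invG c alpha beta) (skew_r rH rG) (skew_s sH sG c alpha beta).
Proof.
case: (tH) => gH mH iH rHc sHc.
case: (tG) => gG mG iG rGc sGc.
case: (aut) => ab ba ca cb [amul ainv ars].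
split.
- exact: skew_groupoid.
- apply: within_contE => -[[h1 g1] [h2 g2]] /= [e1 e2] W.
  move=> /nbhs_prodE [P [Q [/= nP nQ sPQ]]].
  have e3 := @comp_G _ mulG invG rG sG alpha beta ab ba amul ainv ars _ _ _ e2.
  have := @within_contP _ _ _ _ mH (h1, h2) e1 _ nP.
  move=> /nbhs_prodE [A1 [A2 [/= nA1 nA2 sA]]].
  have := @within_contP _ _ _ _ mG (g1, Z (- c h1)%R g2) e3 _ nQ.
  move=> /nbhs_prodE [B1 [B2 [/= nB1 nB2 sB]]].
  have nB2' : nbhs g2 (Z (- c h1)%R @^-1` B2) by exact: Zcont.
  apply/nbhs_prodE; exists ((A1 `&` (c @^-1` [set c h1])) `*` B1),
    (A2 `*` (Z (- c h1)%R @^-1` B2)); split => /=.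
  + apply/nbhs_prodE; exists (A1 `&` (c @^-1` [set c h1])), B1; split => //.
    exact: filterI nA1 (nbhs_c h1).
  + apply/nbhs_prodE; exists A2, (Z (- c h1)%R @^-1` B2); split => //.
  + move=> [a1 a2] [b1 b2] [[/= A1a Ca] B1a] [/= A2b B2b] [/= f1 f2].
    rewrite /skew_mul /=; apply: sPQ.
      exact: sA.
    rewrite Ca; apply: sB => //.
    by apply: (@comp_G _ mulG invG rG sG alpha beta ab ba amul ainv ars); rewrite -Ca.
- apply: continuous_local => -[h g].
  exists ((c @^-1` [set c h]) `*` setT); split.
    by apply/nbhs_prodE; exists (c @^-1` [set c h]), setT; split => //;
       [exact: nbhs_c | exact: filterT].
  exists (fun p : H * G => (invH p.1, (Z (c h) \o invG) p.2)); split.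
    apply: continuous_prod_map => // x.
    exact: (continuous_comp (iG x) (Zcont _ _)).
  by move=> [a b] [/= Ca _]; rewrite /skew_inv /= Ca.
- exact: continuous_prod_map.
- apply: continuous_local => -[h g].
  exists ((c @^-1` [set c h]) `*` setT); split.
    by apply/nbhs_prodE; exists (c @^-1` [set c h]), setT; split => //;
       [exact: nbhs_c | exact: filterT].
  exists (fun p : H * G => (sH p.1, (Z (c h) \o sG) p.2)); split.
    apply: continuous_prod_map => // x.
    exact: (continuous_comp (sGc x) (Zcont _ _)).
  by move=> [a b] [/= Ca _]; rewrite /skew_s /= Ca.
Qed.
End TopSkew.

Section Etale.
Variables (H G : topologicalType) (rH : H -> H) (rG : G -> G).

Lemma skew_etale : etale rH -> etale rG -> etale (skew_r rH rG).
Proof.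
move=> [crH [_ lH]] [crG [_ lG]].
split; first exact: continuous_prod_map.
split; first by move=> y [x _ <-]; exists x.
move=> [h g].
have [U1 [oU1 U1h inj1 img1]] := lH h.
have [U2 [oU2 U2g inj2 img2]] := lG g.
exists (U1 `*` U2); split.
- exact: open_setX.
- by [].
- move=> [a1 a2] [b1 b2] [/= Ua1 Ua2] [/= Ub1 Ub2] [e1 e2].
  by congr pair; [exact: inj1 | exact: inj2].
move=> W oW WU.
exists [set y | exists O, [/\ open O, O y &
   O `&` units (skew_r rH rG) `<=` skew_r rH rG @` W]]; split.
  rewrite openE => y [O [oO Oy sO]]; rewrite /interior.
  apply: (@filterS _ _ _ O); last exact: open_nbhs_nbhs.
  by move=> z Oz; exists O.
apply/seteqP; split; last first.
  by move=> y [[O [oO Oy sO]] ry]; exact: sO.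
move=> _ [w Ww <-]; split; last by exists w.
have := WU _ Ww => -[/= U1w U2w].
have : nbhs w W by apply: open_nbhs_nbhs.
move=> /nbhs_prodE [P [Q [nP nQ sPQ]]].
move: nP nQ; rewrite !nbhsE => -[A [oA Aw] AP] [B [oB Bw] BQ].
have [V1 [oV1 eV1]] := img1 (A `&` U1) (openI oA oU1) (@subIsetr _ _ _).
have [V2 [oV2 eV2]] := img2 (B `&` U2) (openI oB oU2) (@subIsetr _ _ _).
exists (V1 `*` V2); split.
- exact: open_setX.
- split => /=.
    have : (rH @` (A `&` U1)) (rH w.1) by exists w.1.
    by rewrite eV1 => -[].
  have : (rG @` (B `&` U2)) (rG w.2) by exists w.2.
  by rewrite eV2 => -[].
- move=> [y1 y2] [[/= V1y V2y] [[a b] _ e]].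
  case: e => e1 e2.
  have : (V1 `&` units rH) y1 by split => //; exists a.
  rewrite -eV1 => -[a' [Aa' _] ea'].
  have : (V2 `&` units rG) y2 by split => //; exists b.
  rewrite -eV2 => -[b' [Bb' _] eb'].
  exists (a', b'); last by rewrite /skew_r /= ea' eb'.
  by apply: sPQ; [exact: AP | exact: BQ].
Qed.
End Etale.

Section SC.
Variables (H G : topologicalType).

Lemma prod_basis_gen (B1 : set (set H)) (B2 : set (set G)) (B : set (set (H * G))) :
  basis B1 -> basis B2 -> B `<=` open ->
  (forall U1 U2, B1 U1 -> B2 U2 -> B (U1 `*` U2)) -> basis B.
Proof.
move=> b1 b2 Bo BX; apply: basisI => // x W /nbhs_prodE [P [Q [nP nQ sPQ]]].
have [U1 [BU1 U1x U1P]] := @basisP _ _ b1 _ _ nP.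
have [U2 [BU2 U2x U2Q]] := @basisP _ _ b2 _ _ nQ.
exists (U1 `*` U2); split => //.
- exact: BX.
- by move=> [a b] [/= ? ?]; apply: sPQ; [exact: U1P | exact: U2Q].
Qed.

Lemma prod_sc : second_countable (T := H) -> second_countable (T := G) ->
  second_countable (T := (H * G)%type).
Proof.
move=> [B1 cB1 b1] [B2 cB2 b2].
exists ((fun p => p.1 `*` p.2) @` (B1 `*` B2)).
  exact: card_le_trans (card_image_le _ _) (countableX cB1 cB2).
apply: (@prod_basis_gen B1 B2 _ b1 b2).
  move=> _ [[U1 U2] [/= BU1 BU2] <-]; apply: open_setX.
    by case: b1 => + _; apply.
  by case: b2 => + _; apply.
by move=> U1 U2 BU1 BU2; exists (U1, U2).
Qed.
End SC.

Lemma skew_ample (H G : topologicalType) (rH sH : H -> H) (rG sG : G -> G)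
  (c : H -> int) (alpha beta : G -> G) :
  cancel alpha beta -> cancel beta alpha ->
  ample rH sH -> ample rG sG -> ample (skew_r rH rG) (skew_s sH sG c alpha beta).
Proof.
move=> ab ba b1 b2; apply: (@prod_basis_gen H G _ _ _ b1 b2).
  by move=> U [_ [oU _]].
move=> U1 U2 [k1 [o1 [i1 j1]]] [k2 [o2 [i2 j2]]]; split.
  exact: compact_setX.
split; first exact: open_setX.
split.
  move=> [a1 a2] [x1 x2] [/= A1 A2] [/= X1 X2] [e1 e2].
  by congr pair; [exact: i1 | exact: i2].
move=> [a1 a2] [x1 x2] [/= A1 A2] [/= X1 X2] [e1 e2].
have ea := j1 _ _ A1 X1 e1; subst x1.
congr pair; apply: j2 => //.
exact: (can_inj (@zpowK _ _ _ ab ba (c a1))).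
Qed.

Theorem lemma3p2 (H G : topologicalType)
  (mulH : H -> H -> H) (invH rH sH : H -> H)
  (mulG : G -> G -> G) (invG rG sG : G -> G)
  (c : H -> int) (alpha beta : G -> G) :
  is_top_groupoid mulH invH rH sH -> locally_compact [set: H] ->
  hausdorff_space H -> etale rH ->
  is_top_groupoid mulG invG rG sG -> locally_compact [set: G] ->
  hausdorff_space G -> etale rG ->
  cocycle mulH rH sH c -> continuous_Z c ->
  groupoid_automorphism mulG invG rG sG alpha beta ->
  let mul := skew_mul mulH mulG c alpha beta in
  let inv := skew_inv invH invG c alpha beta in
  let r := skew_r rH rG in
  let s := skew_s sH sG c alpha beta in
  [/\ is_top_groupoid mul inv r s,
      locally_compact [set: H * G],
      hausdorff_space (H * G)%type,
      etale r &
      ((second_countable (T := H) -> second_countable (T := G) ->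
         second_countable (T := (H * G)%type)) /\
      (ample rH sH -> ample rG sG -> ample r s))].
Proof.
move=> tH lH hH eH tG lG hG eG cc cZ aut mul inv r s.
have [ab ba _ _ _] := aut.
split.
- exact: (@skew_top H G mulH invH rH sH mulG invG rG sG c alpha beta tH tG cc cZ aut).
- exact: prod_locally_compact.
- exact: prod_hausdorff.
- exact: skew_etale.
- split; first exact: prod_sc.
  exact: skew_ample.
Qed.
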